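(* Let $\widehat{\mathbf Y}\in\mathbb R^{n\times n}$ be an optimal solution of the SDP, $\epsilon=\|\widehat{\mathbf Y}-\mathbf Y^*\|_1/\|\mathbf Y^*\|_1$, and let $B_1,\dots,B_{k'}$ be the sets output by Step 1 (described in the context) on input $\widehat{\mathbf Y},n,k$. Then there exist a partial matching $\pi'$ between $[k]$ and $[k']$ (an injective map from a subset of $[k]$ into $[k']$) and a universal constant $C>0$ such that \[ \Big|\bigcup_{a:\ \pi'(a)\text{ defined}} C^*_a\cap B_{\pi'(a)}\Big|\ge(1-C\epsilon)n. \]
   Context: Integers $n\ge4$, $k\ge2$, $k\mid n$; points $\mathbf h_1,\dots,\mathbf h_n\in\mathbb R^d$ with ground-truth labels $\sigma^*:[n]\to[k]$ and clusters $C^*_a=\{i:\sigma^*(i)=a\}$, each of size $n/k$. $Y^*_{ij}=\mathbb 1\{\sigma^*(i)=\sigma^*(j)\}$. SDP: $A_{ij}=\|\mathbf h_i-\mathbf h_j\|_2^2$; $\widehat{\mathbf Y}$ minimizes $\langle\mathbf Y,\mathbf A\rangle$ subject to $\mathbf Y\mathbf 1_n=\frac nk\mathbf 1_n$, $\mathbf Y\succeq0$, $\mathrm{diag}(\mathbf Y)=\mathbf 1_n$, $\mathbf Y\ge0$. $\|\cdot\|_1$ is the entrywise $\ell_1$ norm; $\widehat{\mathbf Y}_{u\bullet}$ denotes the $u$-th row. Step 1: set $V=[n]$, $B_0=\emptyset$, $t=0$; while $V\setminus\bigcup_{i\le t}B_i\ne\emptyset$: increase $t$ by one, let $V_t=V\setminus\bigcup_{i<t}B_i$,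 for each $u\in V_t$ let $B(u)=\{w\in V_t:\|\widehat{\mathbf Y}_{u\bullet}-\widehat{\mathbf Y}_{w\bullet}\|_1\le\frac{n}{4k}\}$, let $B_t$ be a set $B(u)$ of maximum cardinality over $u\in V_t$, and if $|B_t|>n/k$ remove arbitrary elements so that $|B_t|=n/k$. The output is $B_1,\dots,B_{k'}$ where $k'$ is the final value of $t$. *)

(* Defs.v *)
From HB Require Import structures.
From mathcomp Require Import all_boot all_order all_algebra.
From mathcomp Require Import Rstruct.
From Stdlib Require Rdefinitions.

Set Implicit Arguments.
Unset Strict Implicit.
Unset Printing Implicit Defensive.

Import Order.TTheory GRing.Theory Num.Theory.
Local Open Scope ring_scope.

Notation R := Rdefinitions.R.

Definition l1norm (m n : nat) (M : 'M[R]_(m, n)) : R :=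
  \sum_(i < m) \sum_(j < n) `|M i j|.

Definition mxdot (n : nat) (Y A : 'M[R]_n) : R :=
  \sum_(i < n) \sum_(j < n) Y i j * A i j.

Definition sqdist (d : nat) (x y : 'rV[R]_d) : R :=
  \sum_(l < d) (x 0 l - y 0 l) ^+ 2.

Definition distmx (n d : nat) (h : 'I_n -> 'rV[R]_d) : 'M[R]_n :=
  \matrix_(i, j) sqdist (h i) (h j).

Definition Ystar (n k : nat) (sigma : 'I_n -> 'I_k) : 'M[R]_n :=
  \matrix_(i, j) (sigma i == sigma j)%:R.

Definition cluster (n k : nat) (sigma : 'I_n -> 'I_k) (a : 'I_k) : {set 'I_n} :=
  [set i | sigma i == a].

Definition psd (n : nat) (Y : 'M[R]_n) : Prop :=
  Y^T = Y /\ forall x : 'cV[R]_n, 0 <= (x^T *m Y *m x) 0 0.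

Definition sdp_feasible (n k : nat) (Y : 'M[R]_n) : Prop :=
  [/\ Y *m (const_mx 1 : 'cV[R]_n) = (const_mx (n%:R / k%:R) : 'cV[R]_n),
      psd Y,
      (forall i, Y i i = 1)
    & (forall i j, 0 <= Y i j)].

Definition sdp_optimal (n k d : nat) (h : 'I_n -> 'rV[R]_d) (Y : 'M[R]_n) : Prop :=
  sdp_feasible k Y /\
  forall Y' : 'M[R]_n, sdp_feasible k Y' -> mxdot Y (distmx h) <= mxdot Y' (distmx h).

Definition rowdist (n : nat) (Y : 'M[R]_n) (u w : 'I_n) : R :=
  \sum_(j < n) `|Y u j - Y w j|.

(* V_t = V \ (B_1 u ... u B_{t-1}), with 0-based index t. *)
Definition remaining (n : nat) (Bs : seq {set 'I_n}) (t : nat) : {set 'I_n} :=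
  ~: \bigcup_(s < t) nth set0 Bs s.

Definition ball (n k : nat) (Y : 'M[R]_n) (V : {set 'I_n}) (u : 'I_n) : {set 'I_n} :=
  [set w in V | rowdist Y u w <= n%:R / (4 * k%:R)].

(* Bs = [B_1; ...; B_k'] is a possible output of Step 1 on input (Y, n, k)
   (Step 1 is nondeterministic: ties in the argmax and the removal of
   arbitrary elements). *)
Definition step1_output (n k : nat) (Y : 'M[R]_n) (Bs : seq {set 'I_n}) : Prop :=
  (forall t, (t < size Bs)%N ->
     let V := remaining Bs t in
     exists2 u, u \in V &
       [/\ forall u', u' \in V -> (#|ball k Y V u'| <= #|ball k Y V u|)%N,
           nth set0 Bs t \subset ball k Y V u,
           (#|ball k Y V u| <= n %/ k)%N -> nth set0 Bs t = ball k Y V u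
         & (n %/ k < #|ball k Y V u|)%N -> #|nth set0 Bs t| = (n %/ k)%N])
  /\ remaining Bs (size Bs) = set0.

Definition matched_overlap (n k : nat) (sigma : 'I_n -> 'I_k)
    (Bs : seq {set 'I_n}) (pi : 'I_k -> option 'I_(size Bs)) : {set 'I_n} :=
  \bigcup_(a < k)
    match pi a with
    | Some j => cluster sigma a :&: nth set0 Bs j
    | None => set0
    end.

Definition partial_matching (k k' : nat) (pi : 'I_k -> option 'I_k') : Prop :=
  forall a b j, pi a = Some j -> pi b = Some j -> a = b.

(* Main.v *)
Require Import Defs.
From HB Require Import structures.
From mathcomp Require Import all_boot all_order all_algebra.
From mathcomp Require Import Rstruct.
From mathcomp Require Import zify ring lra.
Import Order.TTheory GRing.Theory Num.Theory.
Local Open Scope ring_scope.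

Lemma card_bigcup_disj (T I : finType) (F : I -> {set T}) :
  (forall i j x, x \in F i -> x \in F j -> i = j) ->
  #|\bigcup_i F i| = (\sum_i #|F i|)%N.
Proof.
move=> dis.
have cE (A : {set T}) : #|A| = (\sum_x (x \in A : nat))%N.
  by rewrite -sum1_card big_mkcond /=; apply: eq_bigr => x _; case: (x \in A).
rewrite cE (eq_bigr (fun i => \sum_x (x \in F i : nat))%N); last by move=> i _; rewrite cE.
rewrite exchange_big /=; apply: eq_bigr => x _.
case: (boolP (x \in \bigcup_i F i)) => [/bigcupP [i0 _ xi0]|nx].
  rewrite (bigD1 i0) //= xi0 big1 // => j nj.
  case: (boolP (x \in F j)) => // xj; by rewrite (dis _ _ _ xi0 xj) eqxx in nj.
rewrite big1 // => i _; case: (boolP (x \in F i)) => // xi.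
by case/negP: nx; apply/bigcupP; exists i.
Qed.

Lemma comb (n k : nat) (sigma : 'I_n -> 'I_k) (Y : 'M[R]_n) (Bs : seq {set 'I_n})
    (good : {set 'I_n}) :
  (forall a, #|cluster sigma a| = (n %/ k)%N) ->
  (forall g w, g \in good -> w \in good -> sigma g = sigma w ->
     rowdist Y g w <= n%:R / (4 * k%:R)) ->
  (forall u w1 w2, w1 \in good -> w2 \in good ->
     rowdist Y u w1 <= n%:R / (4 * k%:R) -> rowdist Y u w2 <= n%:R / (4 * k%:R) ->
     sigma w1 = sigma w2) ->
  step1_output k Y Bs ->
  exists pi : 'I_k -> option 'I_(size Bs),
    partial_matching pi /\ (n <= #|matched_overlap sigma pi| + 2 * #|~: good|)%N.
Proof.
move=> hC H1 H2 [hstep hrem].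
pose B t := nth set0 Bs t.
have subV t : (t < size Bs)%N -> B t \subset remaining Bs t.
  move=> ht; have [u _ [_ sub _ _]] := hstep t ht.
  apply: subset_trans sub _; apply/subsetP => w; rewrite inE => /andP[]//.
have notlater s t x : (s < t)%N -> x \in B s -> x \notin remaining Bs t.
  move=> st xs; rewrite /remaining inE negbK; apply/bigcupP; by exists (Ordinal st).
have cover x : exists2 t, (t < size Bs)%N & x \in B t.
  have: x \notin remaining Bs (size Bs) by rewrite hrem inE.
  rewrite /remaining inE negbK => /bigcupP [[t ht] _ xt]; by exists t.
have Bdisj s t x : (s < size Bs)%N -> (t < size Bs)%N -> x \in B s -> x \in B t -> s = t.
  move=> hs ht xs xt; case: (ltngtP s t) => // st.
  - by have := notlater _ _ _ st xs; rewrite (subsetP (subV _ ht)).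
  - by have := notlater _ _ _ st xt; rewrite (subsetP (subV _ hs)).
pose G a := [set x in good | sigma x == a].
pose P a (t : 'I_(size Bs)) := (B t :&: G a != set0) && (G a \subset remaining Bs t).
pose pi a := [pick t | P a t].
have piS a t : pi a = Some t -> P a t.
  by rewrite /pi; case: pickP => // t' Pt [<-].
have piN a : pi a = None -> G a = set0.
  rewrite /pi; case: pickP => // Pn _.
  apply/eqP; apply/negPn/negP => /set0Pn [x xG].
  have ex: exists t, (t < size Bs)%N && (B t :&: G a != set0).
    have [t ht xt] := cover x; exists t; rewrite ht; apply/set0Pn; exists x.
    by rewrite inE xt xG.
  case: (ex_minnP ex) => t /andP[ht ne] tmin.
  have := Pn (Ordinal ht); rewrite /P /= ne /= => /negP; apply.
  apply/subsetP => y yG; rewrite /remaining inE; apply/bigcupP => [[[s hs] _ ys]].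
  have: (t <= s)%N.
    apply: tmin; rewrite (ltn_trans hs ht); apply/set0Pn; exists y; by rewrite inE ys yG.
  by rewrite leqNgt hs.
have key a (t : 'I_(size Bs)) : P a t -> exists u,
    [/\ (forall y, y \in B t -> rowdist Y u y <= n%:R / (4 * k%:R)),
        exists2 x0, x0 \in B t & x0 \in G a
      & (#|G a| <= #|B t|)%N].
  move=> /andP[ne sub]; have [u uV [umax usub hle hgt]] := hstep t (ltn_ord t).
  case/set0Pn: ne => x0; rewrite inE => /andP[x0B x0G].
  exists u; split.
  - by move=> y /(subsetP usub); rewrite inE => /andP[_ ->].
  - by exists x0.
  - have GA: G a \subset ball k Y (remaining Bs t) x0.
      apply/subsetP => y yG; rewrite inE (subsetP sub _ yG) /=.
      move: x0G yG; rewrite !inE => /andP[g0 /eqP s0] /andP[gy /eqP sy].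
      by apply: H1 => //; rewrite s0 sy.
    have x0V := subsetP sub _ x0G.
    have h1 := subset_leq_card GA. have h2 := umax _ x0V.
    have h3: (#|G a| <= n %/ k)%N.
      rewrite -(hC a); apply: subset_leq_card; apply/subsetP => y.
      by rewrite !inE => /andP[_ ->].
    case: (leqP #|ball k Y (remaining Bs t) u| (n %/ k)) => c.
      by rewrite /B (hle c); apply: leq_trans h1 h2.
    by rewrite /B (hgt c).
have onA a t y : P a t -> y \in B t -> y \in good -> sigma y = a.
  move=> Pt yB yg; have [u [hu [x0 x0B x0G] _]] := key a t Pt.
  move: x0G; rewrite inE => /andP[g0 /eqP <-].
  exact: H2 (hu _ yB) (hu _ x0B).
have pm : partial_matching pi.
  move=> a b j ha hb; have Pa := piS _ _ ha; have Pb := piS _ _ hb.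
  case/andP: (Pa) => /set0Pn [x]; rewrite !inE => /andP[xB /andP[xg /eqP xa]] _.
  by rewrite -xa (onA b j x Pb xB xg).
exists pi; split => //.
pose O a := match pi a with Some t => cluster sigma a :&: B t | None => set0 end.
pose W a := match pi a with Some t => B t :\: good | None => set0 end.
have cO : #|matched_overlap sigma pi| = (\sum_a #|O a|)%N.
  rewrite -card_bigcup_disj //.
  move=> a b x; rewrite /O; case: (pi a) => [ta|]; last by rewrite in_set0.
  case: (pi b) => [tb|]; last by move=> _; rewrite in_set0.
  by rewrite !inE => /andP[/eqP <- _] /andP[/eqP -> _].
have cW : (\sum_a #|W a| <= #|~: good|)%N.
  rewrite -card_bigcup_disj.
    apply: subset_leq_card; apply/subsetP => x /bigcupP [a _].
    by rewrite /W; case: (pi a) => [t|]; rewrite !inE // => /andP[-> _].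
  move=> a b x; rewrite /W; case E1: (pi a) => [ta|]; last by rewrite inE.
  case E2: (pi b) => [tb|]; last by rewrite in_set0.
  rewrite !inE => /andP[_ xa] /andP[_ xb].
  have tab: ta = tb by apply/val_inj; exact: (Bdisj _ _ x (ltn_ord ta) (ltn_ord tb) xa xb).
  by subst; apply: pm E1 E2.
have cG : (\sum_a #|G a|)%N = #|good|.
  rewrite -card_bigcup_disj; last first.
    by move=> a b x; rewrite !inE => /andP[_ /eqP <-] /andP[_ /eqP <-].
  apply: eq_card => x; apply/bigcupP/idP => [[a _]|xg].
    by rewrite inE => /andP[].
  by exists (sigma x); rewrite // inE xg eqxx.
have per a : (#|G a| <= #|O a| + #|W a|)%N.
  rewrite /O /W; case E: (pi a) => [t|]; last by rewrite (piN _ E) cards0.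
  have Pt := piS _ _ E; have [u [_ _ hcard]] := key _ _ Pt.
  apply: (leq_trans hcard); rewrite -(cardsID good (B t)); apply: leq_add => //.
  apply: subset_leq_card; apply/subsetP => y; rewrite !inE => /andP[yB yg].
  by rewrite yB (onA _ _ _ Pt yB yg) eqxx.
have hs : (\sum_a #|G a| <= \sum_a #|O a| + \sum_a #|W a|)%N.
  by rewrite -big_split; apply: leq_sum => a _.
have hn : n = (#|good| + #|~: good|)%N by rewrite cardsC card_ord.
rewrite cO; lia.
Qed.

Theorem lemma12 :
  exists C : R, 0 < C /\
  forall (n k d : nat) (h : 'I_n -> 'rV[R]_d) (sigma : 'I_n -> 'I_k)
         (Yhat : 'M[R]_n) (Bs : seq {set 'I_n}),
    (4 <= n)%N -> (2 <= k)%N -> (k %| n)%N ->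
    (forall a : 'I_k, #|cluster sigma a| = (n %/ k)%N) ->
    sdp_optimal k h Yhat ->
    step1_output k Yhat Bs ->
    let eps := l1norm (Yhat - Ystar sigma) / l1norm (Ystar sigma) in
    exists pi : 'I_k -> option 'I_(size Bs),
      partial_matching pi /\
      (1 - C * eps) * n%:R <= (#|matched_overlap sigma pi|)%:R.
Proof.
exists 16; split; first by rewrite ltr0n.
move=> n k d h sigma Y Bs hn hk hdiv hC _ hstep eps.
set q := (n %/ k)%N.
have kpos : (0 < k)%N by lia.
have npos : (0 < n)%N by lia.
have qpos : (0 < q)%N by rewrite divn_gt0 // dvdn_leq.
have nkq : n = (q * k)%N by rewrite divnK.
have qR : (0 : R) < q%:R by rewrite ltr0n.
have kR : (0 : R) < k%:R by rewrite ltr0n.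
have nR : (0 : R) < n%:R by rewrite ltr0n.
have thrE : n%:R / (4 * k%:R) = q%:R / 4 :> R.
  by rewrite {1}nkq natrM; field; rewrite gt_eqF.
pose rr u := \sum_j `|Y u j - Ystar sigma u j|.
have rr0 u : 0 <= rr u by apply: sumr_ge0 => j _.
pose good := [set u | rr u <= q%:R / 8].
have H1 g w : g \in good -> w \in good -> sigma g = sigma w ->
     rowdist Y g w <= n%:R / (4 * k%:R).
  move=> gg gw sgw; rewrite thrE /rowdist.
  have: \sum_j `|Y g j - Y w j| <= rr g + rr w.
    rewrite /rr -big_split; apply: ler_sum => j _ /=.
    have e: Ystar sigma g j = Ystar sigma w j by rewrite !mxE sgw.
    by rewrite -e (distrC (Y w j)); apply: ler_distD.
  move: gg gw; rewrite !inE => ? ? ?; lra.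
have H2 u w1 w2 : w1 \in good -> w2 \in good ->
     rowdist Y u w1 <= n%:R / (4 * k%:R) -> rowdist Y u w2 <= n%:R / (4 * k%:R) ->
     sigma w1 = sigma w2.
  rewrite thrE !inE => g1 g2 d1 d2; apply/eqP; apply: contraT => ne.
  have lb: q%:R <= \sum_j `|Ystar sigma w1 j - Ystar sigma w2 j|.
    rewrite /q -(hC (sigma w1)) -sum1_card natr_sum big_mkcond /=.
    apply: ler_sum => j _; rewrite !mxE inE.
    case: (eqVneq (sigma j) (sigma w1)) => [sj|nsj].
      by rewrite sj eq_sym (negbTE ne) subr0 normr1.
    by rewrite normr_ge0.
  have ub: \sum_j `|Ystar sigma w1 j - Ystar sigma w2 j|
      <= rr w1 + rowdist Y u w1 + rowdist Y u w2 + rr w2.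
    rewrite /rr /rowdist -!big_split; apply: ler_sum => j _ /=.
    have := ler_distD (Y w1 j) (Ystar sigma w1 j) (Ystar sigma w2 j).
    have := ler_distD (Y u j) (Y w1 j) (Ystar sigma w2 j).
    have := ler_distD (Y w2 j) (Y u j) (Ystar sigma w2 j).
    have := distrC (Ystar sigma w1 j) (Y w1 j); have := distrC (Y w1 j) (Y u j).
    have := distrC (Y w2 j) (Ystar sigma w2 j).
    lra.
  have : (q%:R : R) <= 0 by lra.
  by rewrite leNgt qR.
have [pi [pm hcnt]] := @comb n k sigma Y Bs good hC H1 H2 hstep.
exists pi; split => //.
set O := #|matched_overlap sigma pi|.
set b := #|~: good|.
set D := l1norm (Y - Ystar sigma).
have hcR : n%:R <= O%:R + 2 * b%:R :> R.
  have -> : 2 * b%:R = (2 * b)%N%:R :> R by rewrite natrM.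
  by rewrite -natrD ler_nat.
have eD : D = \sum_u rr u.
  by apply: eq_bigr => i _; apply: eq_bigr => j _; rewrite !mxE.
have hb : b%:R * (q%:R / 8) <= D.
  rewrite eD mulr_natl -sumr_const.
  apply: (@le_trans _ _ (\sum_(u in ~: good) rr u)).
    by apply: ler_sum => u; rewrite !inE -ltNge => /ltW.
  rewrite [X in _ <= X](bigID (fun u => u \in ~: good)) /= lerDl.
  by apply: sumr_ge0 => u _.
have eS : l1norm (Ystar sigma) = (n * q)%N%:R.
  rewrite /l1norm (eq_bigr (fun _ => q%:R)).
    by rewrite -natr_sum sum_nat_const card_ord.
  move=> i _; rewrite /q -(hC (sigma i)) -sum1_card natr_sum [RHS]big_mkcond /=.
  apply: eq_bigr => j _; rewrite !mxE inE eq_sym normr_nat.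
  by case: (_ == _).
rewrite /eps eS -/D.
pose E := D / q%:R.
have hbE : b%:R <= 8 * E.
  rewrite /E -(ler_pM2r qR); move: hb.
  have e8 : 8 * (D / q%:R) * q%:R = 8 * D.
    by field; rewrite gt_eqF.
  rewrite e8 => hb'; lra.
have -> : (1 - 16 * (D / (n * q)%N%:R)) * n%:R = n%:R - 16 * E.
  rewrite /E natrM; field; rewrite ?gt_eqF // ?mulf_neq0 // gt_eqF.
lra.
Qed.
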